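(* Let $\mathcal{X},\mathcal{Y}\in\{\mathcal{U},\mathcal{D},\mathcal{B},\mathcal{L},\mathcal{R}\}$ with $\mathcal{X}\not\le_{\mathfrak T}\mathcal{Y}$. Then for every $I\in\mathcal{X}$ and $J\in\mathcal{Y}$, $\mathrm{Hom}_B(k_I,k_J)=0$.
   Context: Let $k$ be a field. The bipath poset $B$ has underlying set $(\mathbb{R}\times\{1,2\})\sqcup\{-\infty,+\infty\}$. Its order is: $x\le y$ iff $x=-\infty$, or $y=+\infty$, or $x=(s,i)$, $y=(t,i)$ with the same $i$ and $s\le t$. $B$-persistence modules are functors from $B$ (as a category) to $k$-vector spaces, and $\mathrm{Hom}_B$ denotes natural transformations. An interval of $B$ is a nonempty convex and connected subset (convex: $p,q\in I$, $p\le r\le q$ imply $r\in I$; connected: any two elements are joined by a finite sequence in $I$ with consecutive ones comparable). The interval module $k_I$ is $k$ on $I$ and $0$ elsewhere, with identity maps within $I$ and zero maps otherwise. The intervals of $B$ are divided into five types: - $\mathcal{U}$: intervals contained in $\mathbb{R}\times\{1\}$; - $\mathcal{D}$: intervals contained in $\mathbb{R}\times\{2\}$; - $\mathcal{B}=\{B\}$; - $\mathcal{L}$: intervals $\neq B$ containing $-\infty$; - $\mathcal{R}$: intervals $\neq B$ containing $+\infty$. $\le_{\mathfrak T}$ is the partial order on these five types generated by $\mathcal{R}\le\mathcal{U}$, $\mathcal{R}\le\mathcal{B}$, $\mathcal{R}\le\mathcal{D}$, $\mathcal{U}\le\mathcal{L}$, $\mathcal{B}\le\mathcal{L}$, $\mathcal{D}\le\mathcal{L}$.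 It is the reflexive-transitive closure, so also $\mathcal{R}\le\mathcal{L}$. *)

(* Defs.v *)
From HB Require Import structures.
From mathcomp Require Import all_boot all_order all_algebra.
From mathcomp Require Import reals.
From Stdlib Require Import Relations.
Set Implicit Arguments. Unset Strict Implicit. Unset Printing Implicit Defensive.
Import Order.TTheory GRing.Theory Num.Theory.
Local Open Scope ring_scope.

(* the two copies of R are indexed by lane1 (i=1) and lane2 (i=2) *)
Inductive lane := lane1 | lane2.

Definition lane_eqb (a b : lane) : bool :=
  match a, b with lane1, lane1 | lane2, lane2 => true | _, _ => false end.

(* underlying set of the bipath poset B: (R x {1,2}) + {-oo, +oo} *)
Inductive Bpt (R : realType) :=
  | NegInf
  | PosInf
  | Pt of R & lane.
Arguments NegInf {R}. Arguments PosInf {R}.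

Definition Ble (R : realType) (x y : Bpt R) : bool :=
  match x, y with
  | NegInf, _ => true
  | _, PosInf => true
  | Pt s i, Pt t j => lane_eqb i j && (s <= t)
  | _, _ => false
  end.

(* subsets of B (classically, every subset has a boolean indicator) *)
Definition Bsub (R : realType) := Bpt R -> bool.

Definition is_convex (R : realType) (I : Bsub R) : Prop :=
  forall p q r, I p -> I q -> Ble p r -> Ble r q -> I r.

Definition comparable_B (R : realType) (a b : Bpt R) : bool := Ble a b || Ble b a.

Definition is_connected (R : realType) (I : Bsub R) : Prop :=
  forall p q, I p -> I q ->
    exists s : seq (Bpt R), all I s /\ path (@comparable_B R) p s /\ last p s = q.

Definition is_interval (R : realType) (I : Bsub R) : Prop :=
  (exists x, I x) /\ is_convex I /\ is_connected I.

Inductive itype := tU | tD | tB | tL | tR.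

Definition is_whole (R : realType) (I : Bsub R) : Prop := forall x, I x.

Definition in_type (R : realType) (X : itype) (I : Bsub R) : Prop :=
  match X with
  | tU => forall x, I x -> exists r, x = Pt r lane1
  | tD => forall x, I x -> exists r, x = Pt r lane2
  | tB => is_whole I
  | tL => ~ is_whole I /\ I NegInf
  | tR => ~ is_whole I /\ I PosInf
  end.

Inductive type_gen : itype -> itype -> Prop :=
  | gRU : type_gen tR tU
  | gRB : type_gen tR tB
  | gRD : type_gen tR tD
  | gUL : type_gen tU tL
  | gBL : type_gen tB tL
  | gDL : type_gen tD tL.

Definition type_le : itype -> itype -> Prop := clos_refl_trans itype type_gen.

(* Interval module k_I: at x it is k^(dim) with dim = 1 if x in I, 0 otherwise,
   i.e. the row-vector space 'rV[k]_(imdim I x).  Linear maps k^m -> k^n are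
   matrices 'M_(m,n) acting on row vectors (v |-> v *m A). *)
Definition imdim (R : realType) (I : Bsub R) (x : Bpt R) : nat := nat_of_bool (I x).

(* structure map k_I(x <= y): identity when x,y in I, zero otherwise *)
Definition imap (k : fieldType) (R : realType) (I : Bsub R) (x y : Bpt R)
  : 'M[k]_(imdim I x, imdim I y) := const_mx 1.

Definition is_nat_trans (k : fieldType) (R : realType) (I J : Bsub R)
  (eta : forall x : Bpt R, 'M[k]_(imdim I x, imdim J x)) : Prop :=
  forall x y, Ble x y -> eta x *m imap k J x y = imap k I x y *m eta y.

(* Main.v *)
Require Import Defs.
From mathcomp Require Import all_boot all_order all_algebra.
From mathcomp Require Import reals.
From Stdlib Require Import Relations.
Import GRing.Theory.
Local Open Scope ring_scope.

Lemma L1 (k : fieldType) m (a b : bool) (A : 'M[k]_(m, nat_of_bool a)) :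
  A *m (const_mx 1 : 'M_(nat_of_bool a, nat_of_bool b)) = 0 -> a -> b -> A = 0.
Proof.
case: a A => A E //; case: b E => // E _ _.
apply/matrixP => i j; move/matrixP: E => /(_ i j).
by rewrite !mxE big_ord1 mxE mulr1 (ord1 j).
Qed.

Lemma L3 (k : fieldType) n (a b : bool) (A : 'M[k]_(nat_of_bool b, n)) :
  (const_mx 1 : 'M_(nat_of_bool a, nat_of_bool b)) *m A = 0 -> a -> b -> A = 0.
Proof.
case: b A => A E //; case: a E => // E _ _.
apply/matrixP => i j; move/matrixP: E => /(_ i j).
by rewrite !mxE big_ord1 mxE mul1r (ord1 i).
Qed.

Lemma L2 (k : fieldType) m n (a : bool) (B : 'M[k]_(m, nat_of_bool a))
  (C : 'M[k]_(nat_of_bool a, n)) : ~~ a -> B *m C = 0.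
Proof. case: a B C => // B C _. by rewrite (thinmx0 B) mul0mx. Qed.

Lemma eta0 (k : fieldType) (R : realType) (I J : Bsub R)
  (eta : forall x : Bpt R, 'M[k]_(imdim I x, imdim J x)) x :
  ~~ I x || ~~ J x -> eta x = 0.
Proof.
move: (eta x); rewrite /imdim; case: (I x); case: (J x) => //= A _.
- exact: thinmx0.
- exact: flatmx0.
- exact: flatmx0.
Qed.

Lemma upL (k : fieldType) (R : realType) (I J : Bsub R)
  (eta : forall x : Bpt R, 'M[k]_(imdim I x, imdim J x)) x y :
  is_nat_trans eta -> Ble x y -> I x -> J x -> J y -> ~~ I y -> eta x = 0.
Proof.
move=> Hn Hxy Ix Jx Jy Iy; have E := Hn x y Hxy.
rewrite /imap [RHS]L2 // in E; exact: L1 E _ _.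
Qed.

Lemma downL (k : fieldType) (R : realType) (I J : Bsub R)
  (eta : forall x : Bpt R, 'M[k]_(imdim I x, imdim J x)) w x :
  is_nat_trans eta -> Ble w x -> I x -> J x -> I w -> ~~ J w -> eta x = 0.
Proof.
move=> Hn Hxy Ix Jx Iw Jw; have E := Hn w x Hxy.
rewrite /imap [LHS]L2 // in E; exact: L3 (esym E) _ _.
Qed.

Lemma wholeL (R : realType) (I : Bsub R) :
  is_convex I -> I NegInf -> I PosInf -> is_whole I.
Proof. move=> Hc Hn Hp r; apply: (Hc NegInf PosInf) => //; by case: r. Qed.

Ltac tle := solve [apply rt_refl | apply rt_step; constructor
  | apply (rt_trans _ _ _ tB); apply rt_step; constructor].

Theorem lemma4p4 (k : fieldType) (R : realType) (X Y : itype) :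
  ~ type_le X Y ->
  forall I J : Bsub R,
    is_interval I -> is_interval J -> in_type X I -> in_type Y J ->
    forall eta : (forall x : Bpt R, 'M[k]_(imdim I x, imdim J x)),
      is_nat_trans eta -> forall x, eta x = 0.
Proof.
move=> HXY I J [_ [cI _]] [_ [cJ _]] hI hJ eta Hn x.
case Ix: (I x); last by apply: eta0; rewrite Ix.
case Jx: (J x); last by apply: eta0; rewrite Jx orbT.
have A : J PosInf -> I PosInf \/ eta x = 0.
  move=> JP; case IP: (I PosInf); [by left | right].
  by apply: (@upL _ _ _ _ eta x PosInf Hn) => //; [case: x Ix Jx | rewrite IP].
have B : I NegInf -> J NegInf \/ eta x = 0.
  move=> IN; case JN: (J NegInf); [by left | right].
  by apply: (@downL _ _ _ _ eta NegInf x Hn) => //; rewrite JN.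
case: X HXY hI => HXY hI; case: Y HXY hJ => HXY hJ;
  try (exfalso; apply: HXY; tle).
- case: (hI x Ix) => r Er; rewrite Er in Jx; case: (hJ _ Jx) => s [].
  discriminate.
- case: (A (hJ _)) => [IP|]; last exact. case: (hI _ IP) => r; discriminate.
- case: (A (proj2 hJ)) => [IP|]; last exact. case: (hI _ IP) => r; discriminate.
- case: (hI x Ix) => r Er; rewrite Er in Jx; case: (hJ _ Jx) => s [].
  discriminate.
- case: (A (hJ _)) => [IP|]; last exact. case: (hI _ IP) => r; discriminate.
- case: (A (proj2 hJ)) => [IP|]; last exact. case: (hI _ IP) => r; discriminate.
- case: (B (hI _)) => [JN|]; last exact. case: (hJ _ JN) => r; discriminate.
- case: (B (hI _)) => [JN|]; last exact. case: (hJ _ JN) => r; discriminate.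
- case: (B (hI _)) => [JN|]; last exact. exfalso; apply: (proj1 hJ).
  exact: wholeL (proj2 hJ).
- case: (B (proj2 hI)) => [JN|]; last exact. case: (hJ _ JN) => r; discriminate.
- case: (B (proj2 hI)) => [JN|]; last exact. case: (hJ _ JN) => r; discriminate.
- case: (A (hJ _)) => [IP|]; last exact. exfalso; apply: (proj1 hI).
  exact: wholeL (proj2 hI) IP.
- case: (A (proj2 hJ)) => [IP|]; last exact. exfalso; apply: (proj1 hI).
  exact: wholeL (proj2 hI) IP.
Qed.
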